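(* For all positive integers $d$ and $q$, there exists a connected graph $G$ with $\mathrm{diam}(G)=d$ and \[ \Delta(G)=\begin{cases} 2^{q}-1, & \text{if } d=1,\\ 2^{q}, & \text{if } d=2,\\ 2^{q}+1, & \text{if } d\geq 3,\end{cases} \] such that $G$ admits an interval edge coloring (i.e. $G\in\mathfrak{N}$) and \[ W(G)\geq \begin{cases} (d+1)(\Delta(G)-1)-q+2, & \text{if } d=1,\\ (d+1)(\Delta(G)-1)-q+1, & \text{if } d=2,\\ (d+1)(\Delta(G)-1)-q-2, & \text{if } d\geq 3.\end{cases} \]
   Context: All graphs are finite, undirected, without loops or multiple edges. $\Delta(G)$ denotes the maximum degree of $G$ and $\mathrm{diam}(G)$ its diameter. For a positive integer $t$, an interval $t$-coloring of a graph $G$ is a map assigning to each edge of $G$ a color from $\{1,2,\ldots,t\}$ such that every color $i\in\{1,\ldots,t\}$ is used on at least one edge, edges sharing a vertex receive distinct colors, and for each vertex $v$ the set of colors of edges incident to $v$ is an interval of consecutive integers. $\mathfrak{N}$ denotes the set of graphs that admit an interval $t$-coloring for some $t$, and for $G\in\mathfrak{N}$, $W(G)$ denotes the greatest $t$ for which $G$ has an interval $t$-coloring. *)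

(* Defs.v *)
From mathcomp Require Import all_boot.
Set Implicit Arguments. Unset Strict Implicit. Unset Printing Implicit Defensive.

Definition simple_graph (n : nat) (e : rel 'I_n) : Prop :=
  (forall x y, e x y = e y x) /\ (forall x, ~~ e x x).

Definition degree (n : nat) (e : rel 'I_n) (v : 'I_n) : nat := #|[set u | e v u]|.

Definition max_degree (n : nat) (e : rel 'I_n) : nat := \max_(v : 'I_n) degree e v.

Definition reach_within (n : nat) (e : rel 'I_n) (u v : 'I_n) (k : nat) : Prop :=
  exists p : seq 'I_n, [/\ size p <= k, path e u p & last u p = v].

Definition connected_graph (n : nat) (e : rel 'I_n) : Prop :=
  forall u v : 'I_n, exists k, reach_within e u v k.

Definition has_diam (n : nat) (e : rel 'I_n) (d : nat) : Prop :=
  (forall u v, reach_within e u v d) /\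
  (exists u v, forall k, reach_within e u v k -> d <= k).

Definition interval_coloring (n : nat) (e : rel 'I_n) (c : 'I_n -> 'I_n -> nat)
  (t : nat) : Prop :=
  [/\ (forall x y, e x y -> c x y = c y x),
      (forall x y, e x y -> 1 <= c x y <= t),
      (forall i, 1 <= i <= t -> exists x y, e x y /\ c x y = i),
      (forall x y z, e x y -> e x z -> y != z -> c x y != c x z) &
      (forall v a b k, (exists u, e v u /\ c v u = a) ->
                       (exists u, e v u /\ c v u = b) -> a <= k <= b ->
                       exists w, e v w /\ c v w = k)].

Definition interval_colorable (n : nat) (e : rel 'I_n) : Prop :=
  exists t c, @interval_coloring n e c t.

(* Main.v *)
Require Import Defs.
From mathcomp Require Import all_boot zify.

Definition lowp (m x : nat) := if x < m then x else x - m.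

Fixpoint sK (q x : nat) : nat :=
  match q with
  | 0 => 1
  | q'.+1 => if x < 2 ^ q' then sK q' x else sK q' (x - 2 ^ q') + 2 ^ q' - 1
  end.

Fixpoint cK (q x y : nat) : nat :=
  match q with
  | 0 => 0
  | q'.+1 =>
    if (x < 2 ^ q') && (y < 2 ^ q') then cK q' x y
    else if (2 ^ q' <= x) && (2 ^ q' <= y) then cK q' (x - 2 ^ q') (y - 2 ^ q') + 2 * 2 ^ q' - 1
    else if lowp (2 ^ q') x == lowp (2 ^ q') y then sK q' (lowp (2 ^ q') x) + 2 * 2 ^ q' - 2
    else cK q' (lowp (2 ^ q') x) (lowp (2 ^ q') y) + 2 ^ q' - 1
  end.

Lemma expS2 q : 2 ^ q.+1 = 2 * 2 ^ q.
Proof. by rewrite expnS. Qed.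

Lemma sK_A q x : x < 2 ^ q -> sK q.+1 x = sK q x.
Proof. by move=> h /=; rewrite h. Qed.
Lemma sK_B q x : 2 ^ q <= x -> sK q.+1 x = sK q (x - 2 ^ q) + 2 ^ q - 1.
Proof. by move=> h /=; rewrite ltnNge h. Qed.
Lemma cK_AA q x y : x < 2 ^ q -> y < 2 ^ q -> cK q.+1 x y = cK q x y.
Proof. by move=> h1 h2 /=; rewrite h1 h2. Qed.
Lemma cK_BB q x y : 2 ^ q <= x -> 2 ^ q <= y ->
  cK q.+1 x y = cK q (x - 2 ^ q) (y - 2 ^ q) + 2 * 2 ^ q - 1.
Proof. by move=> h1 h2 /=; rewrite h1 h2 ltnNge h1. Qed.
Lemma cK_AB q x y : x < 2 ^ q -> 2 ^ q <= y ->
  cK q.+1 x y = if x == y - 2 ^ q then sK q x + 2 * 2 ^ q - 2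
                else cK q x (y - 2 ^ q) + 2 ^ q - 1.
Proof.
move=> h1 h2 /=; rewrite /lowp h1.
have -> : (y < 2 ^ q) = false by lia.
have -> : (2 ^ q <= x) = false by lia.
done.
Qed.
Lemma cK_BA q x y : 2 ^ q <= x -> y < 2 ^ q ->
  cK q.+1 x y = if x - 2 ^ q == y then sK q (x - 2 ^ q) + 2 * 2 ^ q - 2
                else cK q (x - 2 ^ q) y + 2 ^ q - 1.
Proof.
move=> h1 h2 /=; rewrite /lowp h2.
have -> : (x < 2 ^ q) = false by lia.
have -> : (2 ^ q <= y) = false by lia.
by rewrite andbF.
Qed.

Lemma sK_range q x : x < 2 ^ q -> 1 <= sK q x /\ sK q x + q <= 2 ^ q.
Proof.
elim: q x => [|q IH] x; first by rewrite /= expn0; lia.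
have m1 : 0 < 2 ^ q by rewrite expn_gt0.
rewrite expS2 => hx.
case: (ltnP x (2 ^ q)) => h.
  by rewrite sK_A //; have := IH x h; lia.
rewrite sK_B //; have := IH (x - 2 ^ q); lia.
Qed.

Lemma sK_last q : sK q (2 ^ q - 1) + q = 2 ^ q.
Proof.
elim: q => [|q IH]; first by rewrite /= expn0.
have m1 : 0 < 2 ^ q by rewrite expn_gt0.
rewrite expS2 sK_B; last lia.
have -> : 2 * 2 ^ q - 1 - 2 ^ q = 2 ^ q - 1 by lia.
lia.
Qed.

Lemma cK_sym q x y : cK q x y = cK q y x.
Proof.
elim: q x y => [|q IH] x y //=.
rewrite andbC IH; case: ifP => //= _.
rewrite andbC IH; case: ifP => //= _.
rewrite eq_sym; case: eqP => [->|_] //.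
by rewrite IH.
Qed.

Lemma cK_range q x y : x < 2 ^ q -> y < 2 ^ q -> x != y ->
  sK q x <= cK q x y /\ cK q x y + 2 <= sK q x + 2 ^ q.
Proof.
elim: q x y => [|q IH] x y; first by rewrite expn0; lia.
have m1 : 0 < 2 ^ q by rewrite expn_gt0.
rewrite expS2 => hx hy hxy.
case: (ltnP x (2 ^ q)) => h1; case: (ltnP y (2 ^ q)) => h2.
- rewrite cK_AA // sK_A //; have := IH x y h1 h2 hxy; lia.
- rewrite cK_AB // sK_A //; case: eqP => e.
    lia.
  have := IH x (y - 2 ^ q) h1 ltac:(lia) ltac:(apply/eqP; lia); lia.
- rewrite cK_BA // sK_B //; case: eqP => e.
    lia.
  have := IH (x - 2 ^ q) y ltac:(lia) h2 ltac:(apply/eqP; lia); lia.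
- rewrite cK_BB // sK_B //.
  have := IH (x - 2 ^ q) (y - 2 ^ q) ltac:(lia) ltac:(lia) ltac:(apply/eqP; lia); lia.
Qed.

Lemma cK_onto q x k : x < 2 ^ q -> sK q x <= k -> k + 2 <= sK q x + 2 ^ q ->
  exists y, [/\ y < 2 ^ q, y != x & cK q x y = k].
Proof.
elim: q x k => [|q IH] x k; first by rewrite /= expn0; lia.
have m1 : 0 < 2 ^ q by rewrite expn_gt0.
rewrite expS2 => hx.
case: (ltnP x (2 ^ q)) => h1.
- rewrite sK_A // => hk1 hk2.
  case: (leqP (k + 2) (sK q x + 2 ^ q)) => hk3.
    have [y [hy hyx hc]] := IH x k h1 hk1 hk3.
    exists y; split => //; first lia.
    by rewrite cK_AA.
  case: (leqP (k + 3) (sK q x + 2 * 2 ^ q)) => hk4.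
    have [y [hy hyx hc]] := IH x (k - (2 ^ q - 1)) h1 ltac:(lia) ltac:(lia).
    exists (y + 2 ^ q); split; [lia|apply/eqP; lia|].
    rewrite cK_AB; [|lia|lia].
    have -> : y + 2 ^ q - 2 ^ q = y by lia.
    rewrite eq_sym (negbTE hyx) hc; lia.
  exists (x + 2 ^ q); split; [lia|apply/eqP; lia|].
  rewrite cK_AB; [|lia|lia].
  have -> : x + 2 ^ q - 2 ^ q = x by lia.
  rewrite eqxx; lia.
- rewrite sK_B // => hk1 hk2.
  case: (leqP (k + 2) (sK q (x - 2 ^ q) + 2 * 2 ^ q - 1)) => hk3.
    have [y [hy hyx hc]] := IH (x - 2 ^ q) (k - (2 ^ q - 1)) ltac:(lia) ltac:(lia) ltac:(lia).
    exists y; split; [lia|apply/eqP; lia|].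
    rewrite cK_BA //.
    case: eqP => e; first lia.
    rewrite hc; lia.
  case: (leqP (k + 1) (sK q (x - 2 ^ q) + 2 * 2 ^ q - 1)) => hk4.
    exists (x - 2 ^ q); split; [lia|apply/eqP; lia|].
    rewrite cK_BA; [|lia|lia].
    rewrite eqxx; lia.
  have [y [hy hyx hc]] := IH (x - 2 ^ q) (k - (2 * 2 ^ q - 1)) ltac:(lia) ltac:(lia) ltac:(lia).
  exists (y + 2 ^ q); split; [lia|apply/eqP; lia|].
  rewrite cK_BB; [|lia|lia].
  have -> : y + 2 ^ q - 2 ^ q = y by lia.
  rewrite hc; lia.
Qed.

Lemma cK_inj q x y z : x < 2 ^ q -> y < 2 ^ q -> z < 2 ^ q -> y != x -> z != x ->
  cK q x y = cK q x z -> y = z.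
Proof.
elim: q x y z => [|q IH] x y z; first by rewrite expn0; lia.
have m1 : 0 < 2 ^ q by rewrite expn_gt0.
rewrite expS2 => hx hy hz hyx hzx.
have rg := cK_range.
case: (ltnP x (2 ^ q)) => h1.
- have AB w : 2 ^ q <= w -> w < 2 * 2 ^ q -> sK q x + 2 ^ q - 1 <= cK q.+1 x w /\
      (cK q.+1 x w = sK q x + 2 * 2 ^ q - 2 -> w = x + 2 ^ q).
    move=> w1 w2; rewrite cK_AB //; case: eqP => e; first lia.
    have := rg q x (w - 2 ^ q) h1 ltac:(lia) ltac:(apply/eqP; lia); lia.
  case: (ltnP y (2 ^ q)) => h2; case: (ltnP z (2 ^ q)) => h3.
  + rewrite !cK_AA //; exact: IH.
  + rewrite cK_AA // => e.
    have := rg q x y h1 h2 ltac:(by rewrite eq_sym); have := AB z h3 hz; lia.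
  + rewrite [cK _ x z]cK_AA // => e.
    have := rg q x z h1 h3 ltac:(by rewrite eq_sym); have := AB y h2 hy; lia.
  + rewrite !cK_AB //.
    case: eqP => e1; case: eqP => e2; try lia.
    * have := rg q x (z - 2 ^ q) h1 ltac:(lia) ltac:(apply/eqP; lia); lia.
    * have := rg q x (y - 2 ^ q) h1 ltac:(lia) ltac:(apply/eqP; lia); lia.
    * move=> e; have := IH x (y - 2 ^ q) (z - 2 ^ q) h1 ltac:(lia) ltac:(lia)
        ltac:(apply/eqP; lia) ltac:(apply/eqP; lia) ltac:(lia); lia.
- have hxq : x - 2 ^ q < 2 ^ q by lia.
  have BA w : w < 2 ^ q -> cK q.+1 x w <= sK q (x - 2 ^ q) + 2 * 2 ^ q - 2 /\
      (cK q.+1 x w = sK q (x - 2 ^ q) + 2 * 2 ^ q - 2 -> w = (x - 2 ^ q)).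
    move=> w1; rewrite cK_BA //; case: eqP => e; first lia.
    have := rg q (x - 2 ^ q) w hxq w1 ltac:(apply/eqP; lia); lia.
  case: (ltnP y (2 ^ q)) => h2; case: (ltnP z (2 ^ q)) => h3.
  + rewrite !cK_BA //.
    case: eqP => e1; case: eqP => e2; try lia.
    * have := rg q (x - 2 ^ q) z hxq h3 ltac:(apply/eqP; lia); lia.
    * have := rg q (x - 2 ^ q) y hxq h2 ltac:(apply/eqP; lia); lia.
    * move=> e; apply: (IH (x - 2 ^ q) y z hxq h2 h3); [apply/eqP; lia|apply/eqP; lia|lia].
  + rewrite [cK _ x z]cK_BB // => e.
    have := rg q (x - 2 ^ q) (z - 2 ^ q) hxq ltac:(lia) ltac:(apply/eqP; lia).
    have := BA y h2; lia.
  + rewrite [cK _ x y]cK_BB // => e.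
    have := rg q (x - 2 ^ q) (y - 2 ^ q) hxq ltac:(lia) ltac:(apply/eqP; lia).
    have := BA z h3; lia.
  + rewrite !cK_BB // => e.
    have := IH (x - 2 ^ q) (y - 2 ^ q) (z - 2 ^ q) hxq ltac:(lia) ltac:(lia)
        ltac:(apply/eqP; lia) ltac:(apply/eqP; lia) ltac:(lia); lia.
Qed.

Lemma cK_cover q i : 1 <= i -> i + q + 2 <= 2 * 2 ^ q ->
  exists x, x < 2 ^ q /\ sK q x <= i /\ i + 2 <= sK q x + 2 ^ q.
Proof.
elim: q i => [|q IH] i; first by rewrite expn0; lia.
have m1 : 0 < 2 ^ q by rewrite expn_gt0.
rewrite !expS2 => hi1 hi2.
case: (leqP (i + q + 2) (2 * 2 ^ q)) => h.
  have [x [hx [h3 h4]]] := IH i hi1 h.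
  exists x; rewrite sK_A //; lia.
exists (2 * 2 ^ q - 1); rewrite sK_B; last lia.
have -> : 2 * 2 ^ q - 1 - 2 ^ q = 2 ^ q - 1 by lia.
have := sK_last q; lia.
Qed.

Arguments sK_range {q x}.
Arguments cK_range {q x y}.
Arguments cK_inj {q x y z}.
Arguments cK_onto {q x k}.


Definition J (m u : nat) := u %/ m.
Definition X (m u : nat) := u %% m.
Definition Eg m (u v : nat) : bool :=
  ((J m u == J m v) && (X m u != X m v)) ||
  ((X m u == X m v) && ((J m u == (J m v).+1) || (J m v == (J m u).+1))).
Definition colg q (u v : nat) :=
  if J (2 ^ q) u == J (2 ^ q) v then cK q (X (2 ^ q) u) (X (2 ^ q) v) + J (2 ^ q) u * 2 ^ q
  else sK q (X (2 ^ q) u) + 2 ^ q - 1 + minn (J (2 ^ q) u) (J (2 ^ q) v) * 2 ^ q.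
Definition mkv N m j x : 'I_N.+1 := inord (j * m + x).

Section V.
Variables (N m d : nat) (hN : N.+1 = d * m) (hm : 0 < m).

Lemma JX_lt (u : 'I_N.+1) : J m u < d /\ X m u < m.
Proof.
split; last by rewrite /X ltn_pmod.
by rewrite /J ltn_divLR // -hN.
Qed.

Lemma vinj (u w : 'I_N.+1) : J m u = J m w -> X m u = X m w -> u = w.
Proof.
move=> h1 h2; apply: val_inj => /=.
by rewrite (divn_eq u m) (divn_eq w m); move: h1 h2; rewrite /J /X => -> ->.
Qed.

Lemma mkv_JX j x : j < d -> x < m -> J m (mkv N m j x) = j /\ X m (mkv N m j x) = x.
Proof.
move=> hj hx.
have hlt : j * m + x < N.+1.
  rewrite hN; apply: (@leq_trans (j * m + m)); first by rewrite ltn_add2l.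
  have -> : j * m + m = j.+1 * m by rewrite mulSn addnC.
  by rewrite leq_mul2r hj orbT.
rewrite /mkv /J /X inordK //.
split; first by rewrite divnMDl // divn_small // addn0.
by rewrite modnMDl modn_small.
Qed.

End V.

Section R.
Variables (n : nat) (e : rel 'I_n).
Lemma reach0 u : reach_within e u u 0.
Proof. by exists [::]. Qed.
Lemma reach_snoc u v w k : reach_within e u v k -> e v w -> reach_within e u w k.+1.
Proof.
move=> [p [h1 h2 h3]] hvw; exists (rcons p w); split.
- by rewrite size_rcons.
- by rewrite rcons_path h2 h3.
- by rewrite last_rcons.
Qed.
Lemma reach_mono u v k k' : k <= k' -> reach_within e u v k -> reach_within e u v k'.
Proof. by move=> hk [p [h1 h2 h3]]; exists p; split => //; apply: leq_trans hk. Qed.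
Lemma reach_cat u v w k1 k2 :
  reach_within e u v k1 -> reach_within e v w k2 -> reach_within e u w (k1 + k2).
Proof.
move=> [p [h1 h2 h3]] [p' [h1' h2' h3']]; exists (p ++ p'); split.
- by rewrite size_cat leq_add.
- by rewrite cat_path h2 h3 h2'.
- by rewrite last_cat h3.
Qed.
End R.
Arguments reach0 {n e}.
Arguments reach_snoc {n e u v w k}.
Arguments reach_mono {n e u v k k'}.
Arguments reach_cat {n e u v w k1 k2}.

Lemma nb q u v : Eg (2 ^ q) u v ->
  (J (2 ^ q) v = J (2 ^ q) u /\ X (2 ^ q) v != X (2 ^ q) u /\
     colg q u v = cK q (X (2 ^ q) u) (X (2 ^ q) v) + J (2 ^ q) u * 2 ^ q) \/
  (X (2 ^ q) v = X (2 ^ q) u /\ J (2 ^ q) v = (J (2 ^ q) u).+1 /\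
     colg q u v = sK q (X (2 ^ q) u) + 2 ^ q - 1 + J (2 ^ q) u * 2 ^ q) \/
  (X (2 ^ q) v = X (2 ^ q) u /\ J (2 ^ q) u = (J (2 ^ q) v).+1 /\
     colg q u v = sK q (X (2 ^ q) u) + J (2 ^ q) u * 2 ^ q - 1).
Proof.
have hm : 0 < 2 ^ q by rewrite expn_gt0.
have hs := @sK_range q (X (2 ^ q) u) ltac:(by rewrite /X ltn_pmod).
rewrite /Eg /colg.
move: (J (2 ^ q) u) (J (2 ^ q) v) (X (2 ^ q) u) (X (2 ^ q) v) hs => ju jv xu xv hs.
case/orP => [/andP [/eqP h1 h2]|/andP [/eqP h1 /orP [/eqP h2|/eqP h2]]].
- left; rewrite h1 eqxx; split => //; split => //; by rewrite eq_sym.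
- right; right; subst; split => //; split => //.
  have -> : (jv.+1 == jv) = false by lia.
  have -> : minn jv.+1 jv = jv by lia.
  rewrite mulSn; lia.
- right; left; subst; split => //; split => //.
  have -> : (ju == ju.+1) = false by lia.
  have -> : minn ju ju.+1 = ju by lia.
  done.
Qed.


Section Main.
#[local] Set Default Proof Using "All".
Variables (q d N : nat) (hd : 0 < d) (hq : 0 < q) (hN : N.+1 = d * 2 ^ q).
Local Notation m := (2 ^ q).
Local Notation e := (fun u v : 'I_N.+1 => Eg (2 ^ q) u v).

Lemma hm : 0 < m. Proof. by rewrite expn_gt0. Qed.
Lemma hm2 : 1 < m.
Proof. by case: q hq => // q' _; rewrite expS2; have := @expn_gt0 2 q'; lia. Qed.

Lemma JXv (u : 'I_N.+1) : J m u < d /\ X m u < m.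
Proof. exact: (@JX_lt N m d hN hm u). Qed.
Lemma vinjv (u w : 'I_N.+1) : J m u = J m w -> X m u = X m w -> u = w.
Proof. exact: (@vinj N m). Qed.
Lemma mkvv j x : j < d -> x < m -> J m (mkv N m j x) = j /\ X m (mkv N m j x) = x.
Proof. exact: (@mkv_JX N m d hN hm). Qed.

Lemma simple : simple_graph e.
Proof.
split => [x y|x] /=; rewrite /Eg.
- move: (J m x) (J m y) (X m x) (X m y) => a b c f.
  by rewrite (eq_sym b a) (eq_sym f c) (orbC (b == a.+1)).
- by rewrite !eqxx /=; apply/negP => /orP [|] /eqP; lia.
Qed.

Lemma vert x : x < m -> forall k j, j + k < d ->
  reach_within e (mkv N m j x) (mkv N m (j + k) x) k /\
  reach_within e (mkv N m (j + k) x) (mkv N m j x) k.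
Proof.
move=> hx; elim => [|k IH] j hjk.
  by rewrite addn0; split; apply: reach0.
have [h1 h2] := IH j ltac:(lia).
have [h3 h4] := IH j.+1 ltac:(lia).
have [a1 a2] := mkvv j x ltac:(lia) hx.
have [b1 b2] := mkvv j.+1 x ltac:(lia) hx.
have [c1 c2] := mkvv (j + k) x ltac:(lia) hx.
have [d1 d2] := mkvv (j + k.+1) x ltac:(lia) hx.
split.
- apply: (reach_snoc h1); rewrite /= /Eg c1 c2 d1 d2 eqxx /=.
  apply/orP; right; apply/orP; right; apply/eqP; lia.
- rewrite -addSnnS.
  apply: (reach_snoc h4); rewrite /= /Eg a1 a2 b1 b2 eqxx /=.
  apply/orP; right; apply/orP; left; apply/eqP; lia.
Qed.

Lemma diam_up (u v : 'I_N.+1) : reach_within e u v d.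
Proof.
have [ju xu] := JXv u; have [jv xv] := JXv v.
set w := mkv N m (J m u) (X m v).
have [w1 w2] := mkvv (J m u) (X m v) ju xv.
have h1 : reach_within e u w 1.
  case: (eqVneq (X m u) (X m v)) => hx.
    rewrite (vinjv u w) //; last by rewrite w2.
    exact: reach_mono (reach0 _).
  apply: reach_snoc (reach0 _) _; rewrite /= /Eg w1 w2 eqxx hx //.
have h2 : reach_within e w v (d - 1).
  case: (leqP (J m u) (J m v)) => hj.
    have [a _] := @vert (X m v) xv (J m v - J m u) (J m u) ltac:(lia).
    have [b1 b2] := mkvv (J m v) (X m v) jv xv.
    have e1 : J m u + (J m v - J m u) = J m v by lia.
    rewrite e1 in a.
    have -> : v = mkv N m (J m v) (X m v) by apply: vinjv; rewrite ?b1 ?b2.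
    apply: (reach_mono _ a); lia.
  have [_ a] := @vert (X m v) xv (J m u - J m v) (J m v) ltac:(lia).
  have [b1 b2] := mkvv (J m v) (X m v) jv xv.
  have -> : v = mkv N m (J m v) (X m v) by apply: vinjv; rewrite ?b1 ?b2.
  have -> : w = mkv N m (J m v + (J m u - J m v)) (X m v).
    by rewrite /w; congr mkv; lia.
  apply: (reach_mono _ a); lia.
have := reach_cat h1 h2.
by have -> : 1 + (d - 1) = d by lia.
Qed.

Definition phi (w : 'I_N.+1) := J m w + (X m w != 0).

Lemma phi_path p (a : 'I_N.+1) : path e a p -> phi (last a p) <= phi a + size p.
Proof.
elim: p a => [|b p IH] a /=; first by rewrite addn0.
case/andP => hab hp.
have := IH b hp.
suff : phi b <= phi a + 1 by lia.
rewrite /phi.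
case/orP: hab => [/andP [/eqP h1 _]|/andP [/eqP h1 /orP [/eqP h2|/eqP h2]]].
- by rewrite h1; case: (X m b != 0); case: (X m a != 0) => /=; lia.
- by rewrite h1; case: (X m b != 0); lia.
- by rewrite h1; case: (X m b != 0); lia.
Qed.

Lemma diam_low : exists u v : 'I_N.+1, forall k, reach_within e u v k -> d <= k.
Proof.
exists (mkv N m 0 0), (mkv N m (d - 1) 1) => k [p [h1 h2 h3]].
have := @phi_path p _ h2; rewrite h3 /phi.
have [a1 a2] := mkvv 0 0 hd hm.
have [b1 b2] := mkvv (d - 1) 1 ltac:(lia) hm2.
rewrite a1 a2 b1 b2 /=; lia.
Qed.


Definition Dl := if d == 1 then m - 1 else if d == 2 then m else m + 1.

Lemma card_S j : j < d -> #|[set w : 'I_N.+1 | J m w == j]| = m.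
Proof.
move=> hj.
have -> : [set w : 'I_N.+1 | J m w == j] = [set mkv N m j (val y) | y : 'I_m].
  apply/setP => w; rewrite inE; apply/idP/imsetP.
    move/eqP => hw; have [_ hx] := JXv w.
    exists (Ordinal hx) => //=.
    have [a1 a2] := mkvv j (X m w) hj hx.
    by apply: vinjv; rewrite ?a1 ?a2.
  move=> [y _ ->]; have [a1 _] := mkvv j (val y) hj (ltn_ord y).
  by rewrite a1.
rewrite card_imset ?card_ord // => y1 y2 h.
apply: val_inj.
have [_ a2] := mkvv j (val y1) hj (ltn_ord y1).
have [_ b2] := mkvv j (val y2) hj (ltn_ord y2).
by rewrite -a2 -b2 h.
Qed.

Lemma card_le1_JX (A : {set 'I_N.+1}) jj xx :
  (forall w, w \in A -> J m w = jj /\ X m w = xx) -> #|A| <= 1.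
Proof.
move=> hA; apply/card_le1_eqP => w1 w2 h1 h2.
have [a1 a2] := hA w1 h1; have [b1 b2] := hA w2 h2.
by apply: vinjv; rewrite ?a1 ?a2 ?b1 ?b2.
Qed.

Lemma card_empty (A : {set 'I_N.+1}) : (forall w, w \in A -> False) -> #|A| = 0.
Proof.
move=> hA; apply/eqP; rewrite cards_eq0; apply/eqP/setP => w; rewrite inE.
by apply/negP => /hA.
Qed.

Lemma deg_le (v : 'I_N.+1) : degree e v <= Dl.
Proof.
rewrite /degree.
set S := [set w : 'I_N.+1 | J m w == J m v].
set A := [set w : 'I_N.+1 | (J m w == (J m v).+1) && (X m w == X m v)].
set B := [set w : 'I_N.+1 | (J m v == (J m w).+1) && (X m w == X m v)].
have hsub : [set u | e v u] \subset (S :\ v) :|: (A :|: B).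
  apply/subsetP => w; rewrite !inE /Eg.
  case/orP => [/andP [h1 h2]|/andP [h1 /orP [h2|h2]]].
  - rewrite (eq_sym (J m w)) h1 andbT /=; apply/orP; left.
    by apply/eqP => hw; rewrite hw eqxx in h2.
  - by rewrite h2 (eq_sym (X m w)) h1 /= !orbT.
  - by rewrite h2 (eq_sym (X m w)) h1 /= !orbT.
have hS : #|S :\ v| = m - 1.
  have := cardsD1 v S; rewrite card_S; last by have [] := JXv v.
  rewrite /S inE eqxx /= add1n => h.
  by rewrite [in RHS]h subn1.
have hA : #|A| <= ((J m v).+1 < d).
  case: ltnP => h.
    by apply: (@card_le1_JX _ (J m v).+1 (X m v)) => w; rewrite inE => /andP [/eqP -> /eqP ->].
  rewrite card_empty // => w; rewrite inE => /andP [/eqP hw _].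
  have [] := JXv w; lia.
have hB : #|B| <= (0 < J m v).
  case: (posnP (J m v)) => h.
    rewrite card_empty // => w; rewrite inE h => /andP [/eqP hw _]; lia.
  by apply: (@card_le1_JX _ (J m v).-1 (X m v)) => w; rewrite inE => /andP [/eqP hw /eqP ->]; split => //; lia.
have := subset_leq_card hsub.
have := (leq_card_setU (S :\ v) (A :|: B)).1.
have := (leq_card_setU A B).1.
have [jv _] := JXv v.
rewrite hS /Dl; case: eqP => [d1|_]; first by move: hA hB; lia.
case: eqP => [d2|_]; first by move: hA hB; lia.
move: hA hB; lia.
Qed.

Lemma nb_int (v w : 'I_N.+1) : w != v -> J m w = J m v -> Eg m v w.
Proof.
move=> hne hj; rewrite /Eg hj eqxx /=; apply/orP; left.
apply/negP => /eqP hx; move/negP: hne; apply; apply/eqP; exact: vinjv.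
Qed.

Lemma deg_ge : exists v : 'I_N.+1, Dl <= degree e v.
Proof.
have hS j (v : 'I_N.+1) : j < d -> J m v = j -> #|[set w : 'I_N.+1 | J m w == j] :\ v| = m - 1.
  move=> hj hv; have := cardsD1 v [set w : 'I_N.+1 | J m w == j]; rewrite card_S //.
  rewrite inE hv eqxx add1n => h; by rewrite [in RHS]h subn1.
rewrite /Dl /degree; case: eqP => [d1|dn1].
  exists (mkv N m 0 0); have [a1 a2] := mkvv 0 0 hd hm.
  rewrite -(hS 0 (mkv N m 0 0)) //; apply: subset_leq_card; apply/subsetP => w.
  by rewrite !inE => /andP [hw1 /eqP hw2]; apply: nb_int; rewrite // a1.
case: eqP => [d2|dn2].
  have [a1 a2] := mkvv 0 0 hd hm.
  have [b1 b2] := mkvv 1 0 ltac:(lia) hm.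
  exists (mkv N m 0 0).
  have := cardsU1 (mkv N m 1 0) ([set w : 'I_N.+1 | J m w == 0] :\ mkv N m 0 0).
  rewrite hS // !inE b1 andbF /= => h.
  apply: (@leq_trans (1 + (m - 1))); first by have := hm; lia.
  rewrite -h; apply: subset_leq_card; apply/subsetP => w.
  rewrite !inE => /orP [/eqP ->|/andP [hw1 /eqP hw2]].
    by rewrite /Eg a1 a2 b1 b2 eqxx /=.
  by apply: nb_int; rewrite // a1.
have [a1 a2] := mkvv 0 0 hd hm.
have [b1 b2] := mkvv 1 0 ltac:(lia) hm.
have [c1 c2] := mkvv 2 0 ltac:(lia) hm.
exists (mkv N m 1 0).
set T := [set w : 'I_N.+1 | J m w == 1] :\ mkv N m 1 0.
have hT : #|T| = m - 1 by rewrite /T hS ?b1 //; lia.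
have hdn : mkv N m 0 0 \notin T by rewrite /T !inE a1 andbF.
have hne : (mkv N m 2 0 == mkv N m 0 0) = false.
  by apply/negP => /eqP h; move: c1; rewrite h a1.
have hup : mkv N m 2 0 \notin mkv N m 0 0 |: T by rewrite /T !inE hne c1 andbF.
have h1 : #|mkv N m 0 0 |: T| = 1 + (m - 1) by rewrite cardsU1 hdn hT.
have h2 : #|mkv N m 2 0 |: (mkv N m 0 0 |: T)| = 1 + (1 + (m - 1)).
  by rewrite cardsU1 hup h1.
apply: (@leq_trans (1 + (1 + (m - 1)))); first by have := hm; lia.
rewrite -h2; apply: subset_leq_card; apply/subsetP => w.
rewrite !inE => /orP [/eqP ->|/orP [/eqP ->|/andP [hw1 /eqP hw2]]].
- by rewrite /Eg b1 b2 c1 c2 eqxx /=.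
- by rewrite /Eg a1 a2 b1 b2 eqxx /=.
- by apply: nb_int; rewrite // b1.
Qed.

Lemma maxdeg : max_degree e = Dl.
Proof.
apply/eqP; rewrite eqn_leq; apply/andP; split.
  by apply/bigmax_leqP => v _; apply: deg_le.
have [v hv] := deg_ge; apply: leq_trans hv _.
exact: (leq_bigmax (F := fun v => degree e v) v).
Qed.


Definition tspan := 2 * m - q - 2 + (d - 1) * m.

Lemma facts (v : 'I_N.+1) :
  [/\ 1 <= sK q (X m v), sK q (X m v) + q <= m, J m v * m <= (d - 1) * m,
      (J m v).+1 < d -> J m v * m + m <= (d - 1) * m &
      0 < J m v -> m <= J m v * m].
Proof.
have [jv xv] := JXv v.
have [s1 s2] := sK_range xv.
split => //.
- by rewrite leq_mul2r; apply/orP; right; lia.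
- move=> h; have -> : J m v * m + m = (J m v).+1 * m by rewrite mulSn addnC.
  rewrite leq_mul2r; apply/orP; right; lia.
- by move=> h; rewrite -{1}(mul1n m) leq_mul2r; apply/orP; right.
Qed.

Lemma col_range (v w : 'I_N.+1) : Eg m v w -> 1 <= colg q v w <= tspan.
Proof.
move=> h; have [s1 s2 f1 f2 f3] := facts v; have [jv xv] := JXv v; have [jw xw] := JXv w.
rewrite /tspan.
case: (@nb q _ _ h) => [[h1 [h2 ->]]|[[h1 [h2 ->]]|[h1 [h2 ->]]]].
- have := cK_range xv xw ltac:(by rewrite eq_sym); lia.
- have := f2 ltac:(lia); lia.
- have := f3 ltac:(lia); lia.
Qed.

Lemma col_sym (v w : 'I_N.+1) : Eg m v w -> colg q v w = colg q w v.
Proof.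
move=> h; rewrite /colg.
case: (@nb q _ _ h) => [[h1 [h2 _]]|[[h1 [h2 _]]|[h1 [h2 _]]]].
- by rewrite h1 eqxx cK_sym.
- rewrite h1 h2; have -> : (J m v == (J m v).+1) = false by lia.
  have -> : ((J m v).+1 == J m v) = false by lia.
  by rewrite minnC.
- rewrite h1 h2; have -> : (J m w == (J m w).+1) = false by lia.
  have -> : ((J m w).+1 == J m w) = false by lia.
  by rewrite minnC.
Qed.

Lemma col_proper (v y z : 'I_N.+1) : Eg m v y -> Eg m v z -> y != z ->
  colg q v y != colg q v z.
Proof.
move=> hy hz hyz; apply/negP => /eqP hc.
move/negP: hyz; apply; apply/eqP.
have [s1 s2 f1 f2 f3] := facts v; have [jv xv] := JXv v.
have [jy xy] := JXv y; have [jz xz] := JXv z.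
case: (@nb q _ _ hy) => [[a1 [a2 a3]]|[[a1 [a2 a3]]|[a1 [a2 a3]]]];
case: (@nb q _ _ hz) => [[b1 [b2 b3]]|[[b1 [b2 b3]]|[b1 [b2 b3]]]];
rewrite a3 b3 in hc.
- apply: vinjv; first by rewrite a1 b1.
  apply: (cK_inj xv xy xz a2 b2); lia.
- have := cK_range xv xy ltac:(by rewrite eq_sym); lia.
- have := cK_range xv xy ltac:(by rewrite eq_sym); have := f3 ltac:(lia); lia.
- have := cK_range xv xz ltac:(by rewrite eq_sym); lia.
- by apply: vinjv; rewrite ?a1 ?b1 ?a2 ?b2.
- have := f3 ltac:(lia); lia.
- have := cK_range xv xz ltac:(by rewrite eq_sym); have := f3 ltac:(lia); lia.
- have := f3 ltac:(lia); lia.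
- apply: vinjv; lia.
Qed.

Lemma col_interval (v : 'I_N.+1) a b k :
  (exists u : 'I_N.+1, Eg m v u /\ colg q v u = a) ->
  (exists u : 'I_N.+1, Eg m v u /\ colg q v u = b) ->
  a <= k <= b -> exists w : 'I_N.+1, Eg m v w /\ colg q v w = k.
Proof.
move=> [u1 [h1 ha]] [u2 [h2 hb]] hk.
case: (eqVneq k a) => [->|hka]; first by exists u1.
case: (eqVneq k b) => [->|hkb]; first by exists u2.
have [s1 s2 f1 f2 f3] := facts v; have [jv xv] := JXv v.
have lo : sK q (X m v) + J m v * m <= k.
  have [j1 x1] := JXv u1.
  case: (@nb q _ _ h1) => [[a1 [a2 a3]]|[[a1 [a2 a3]]|[a1 [a2 a3]]]]; rewrite a3 in ha.
  - have := cK_range xv x1 ltac:(by rewrite eq_sym); lia.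
  - lia.
  - have := f3 ltac:(lia); lia.
have hi : k + 2 <= sK q (X m v) + m + J m v * m.
  have [j2 x2] := JXv u2.
  case: (@nb q _ _ h2) => [[a1 [a2 a3]]|[[a1 [a2 a3]]|[a1 [a2 a3]]]]; rewrite a3 in hb.
  - have := cK_range xv x2 ltac:(by rewrite eq_sym); lia.
  - lia.
  - have := f3 ltac:(lia); lia.
have [y [hy hyx hc]] := cK_onto (k := k - J m v * m) xv ltac:(lia) ltac:(lia).
have [c1 c2] := mkvv (J m v) y jv hy.
exists (mkv N m (J m v) y); split.
- by apply: nb_int; rewrite ?c1 // ; apply/eqP => hh; move: hyx; rewrite -c2 hh eqxx.
- rewrite /colg c1 c2 eqxx hc; lia.
Qed.


Lemma col_onto i : 1 <= i <= tspan ->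
  exists x y : 'I_N.+1, Eg m x y /\ colg q x y = i.
Proof.
move=> /andP [i1 i2].
have hl := sK_last q.
have hm1 : m - 1 < m by have := hm; lia.
have [hs1 _] := sK_range hm1.
case: (leqP (i + q + 2) (2 * m)) => hc.
  have [x [hx [x1 x2]]] := @cK_cover q i i1 hc.
  have [y [hy hyx hcy]] := cK_onto hx x1 x2.
  have [a1 a2] := mkvv 0 x hd hx; have [b1 b2] := mkvv 0 y hd hy.
  exists (mkv N m 0 x), (mkv N m 0 y); split.
    apply: nb_int; last by rewrite a1 b1.
    by apply/eqP => hh; move: hyx; rewrite -a2 -b2 hh eqxx.
  by rewrite /colg a1 b1 a2 b2 eqxx hcy; lia.
set r := i - (2 * m - q - 2) - 1.
have hr : r < (d - 1) * m by rewrite /r /tspan in i2 *; lia.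
have hj : r %/ m < d - 1 by rewrite ltn_divLR // hm.
have hrr : r %% m < m by rewrite ltn_mod hm.
have hre := divn_eq r m.
move: (r %/ m) (r %% m) hj hrr hre => j rr hj hrr hre.
have hjm : j.+1 * m = j * m + m by rewrite mulSn addnC.
have [a1 a2] := mkvv j (m - 1) ltac:(lia) hm1.
have [b1 b2] := mkvv j.+1 (m - 1) ltac:(lia) hm1.
case: (posnP rr) => hr0.
  exists (mkv N m j (m - 1)), (mkv N m j.+1 (m - 1)); split.
    by rewrite /Eg a1 a2 b1 b2 eqxx /= eqxx !orbT.
  rewrite /colg a1 a2 b1 b2.
  have -> : (j == j.+1) = false by lia.
  have -> : minn j j.+1 = j by lia.
  rewrite /r in hre; lia.
have [y [hy hyx hcy]] := @cK_onto q (m - 1) (i - j.+1 * m) hm1 ltac:(rewrite /r in hre; lia) ltac:(rewrite /r in hre; lia).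
have [c1 c2] := mkvv j.+1 y ltac:(lia) hy.
exists (mkv N m j.+1 (m - 1)), (mkv N m j.+1 y); split.
  apply: nb_int; last by rewrite b1 c1.
  by apply/eqP => hh; move: hyx; rewrite -b2 -c2 hh eqxx.
rewrite /colg b1 c1 b2 c2 eqxx hcy; rewrite /r in hre; lia.
Qed.

Lemma coloring : interval_coloring (fun u v : 'I_N.+1 => Eg m u v) (fun u v : 'I_N.+1 => colg q u v) tspan.
Proof.
split.
- exact: col_sym.
- exact: col_range.
- exact: col_onto.
- exact: col_proper.
- exact: col_interval.
Qed.

End Main.


Theorem theorem5 (d q : nat) (hd : 0 < d) (hq : 0 < q) :
  exists (n : nat) (e : rel 'I_n),
    [/\ simple_graph e, connected_graph e, has_diam e d &
        max_degree e = (if d == 1 then 2 ^ q - 1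
                        else if d == 2 then 2 ^ q else 2 ^ q + 1) /\
        (interval_colorable e /\
        (* W(G) >= bound: some interval t-coloring with t >= bound;
           inequality rearranged to avoid truncated subtraction *)
        exists t c, interval_coloring e c t /\
          (if d == 1 then (d + 1) * (max_degree e - 1) + 2 <= t + q
           else if d == 2 then (d + 1) * (max_degree e - 1) + 1 <= t + q
           else (d + 1) * (max_degree e - 1) <= t + q + 2))].
Proof.
pose N := (d * 2 ^ q).-1.
have hN : N.+1 = d * 2 ^ q by rewrite /N prednK // muln_gt0 hd expn_gt0.
exists N.+1, (fun u v : 'I_N.+1 => Eg (2 ^ q) u v).
have hmd := maxdeg q d N hd hq hN.
have hcol := coloring q d N hd hq hN.
have [s1 s2] := @sK_range q 0 (expn_gt0 2 q).
split.
- exact: simple q d N hd hq hN.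
- by move=> u v; exists d; exact: diam_up q d N hd hq hN u v.
- by split; [exact: diam_up q d N hd hq hN | exact: diam_low q d N hd hq hN].
- rewrite hmd /Dl; split => //; split.
    by exists (tspan q d), (fun u v : 'I_N.+1 => colg q u v).
  exists (tspan q d), (fun u v : 'I_N.+1 => colg q u v); split => //.
  rewrite /tspan.
  case: eqP => [->|d1]; first by rewrite subnn mul0n; lia.
  case: eqP => [->|d2]; first by rewrite mul1n; lia.
  have -> : (d + 1) * (2 ^ q + 1 - 1) = (d - 1) * 2 ^ q + 2 * 2 ^ q.
    by rewrite addnK -mulnDl; congr (_ * _); lia.
  lia.
Qed.
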